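(* Every mirror graph is harmonic-even. Equivalently (for partial cubes), if $G$ is a mirror graph with isometric dimension $i(G)$, then every vertex $v$ of $G$ has a vertex at distance exactly $i(G)$ from $v$.
   Context: All graphs are finite, simple and connected; $d$ denotes the shortest-path distance. A partition $\{E_1,\dots,E_k\}$ of $E(G)$ is a mirror partition if for every $i$ there is an automorphism $\alpha_i$ of $G$ such that (i) for every edge $uv\in E_i$, $\alpha_i(u)=v$ and $\alpha_i(v)=u$; (ii) $G-E_i$ has exactly two connected components $G_i^1,G_i^2$ and $\alpha_i$ maps $G_i^1$ isomorphically onto $G_i^2$. A graph with a mirror partition is a mirror graph. A partial cube is a graph admitting an isometric embedding into a hypercube $Q_d$. On edges define $ab\,\Theta\,xy$ iff $d(a,x)+d(b,y)\neq d(a,y)+d(b,x)$; in a partial cube $\Theta$ is an equivalence relation whose classes are the $\Theta$-classes, and the isometric dimension $i(G)$ is the number of $\Theta$-classes. Every mirror graph is a partial cube and its mirror partition coincides with the partition into $\Theta$-classes. A graph is even if every vertex $v$ has a unique vertex $\bar v$ at distance $\mathrm{diam}(G)$; it is harmonic-even if moreover $\bar u\bar v$ is an edge whenever $uv$ is an edge. A partial cube is harmonic-even iff every vertex has a vertex at distance $i(G)$ from it. *)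

(* Defs.v *)
(* A finite simple graph is a symmetric irreflexive
   relation e : rel T on a finType T. *)
From mathcomp Require Import all_boot.
Set Implicit Arguments. Unset Strict Implicit. Unset Printing Implicit Defensive.

Section Graphs.
Variable T : finType.
Implicit Types (e : rel T) (x y : T).

Definition simple_connected_graph e : Prop :=
  symmetric e /\ irreflexive e /\ (forall x y, connect e x y).

Definition has_walk e x y (n : nat) : bool :=
  [exists p : n.-tuple T, path e x p && (last x p == y)].

(* shortest-path distance: least n with a walk of length n
   (all shortest paths in a connected graph have length < #|T|) *)
Definition dist e x y : nat :=
  find (has_walk e x y) (iota 0 #|T|).

Definition diam e : nat := \max_(x : T) \max_(y : T) dist e x y.

Definition edges e : {set {set T}} :=
  [set [set x; y] | x in T, y in T & e x y].

Definition del_edges e (F : {set {set T}}) : rel T :=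
  [rel x y | e x y && ([set x; y] \notin F)].

Definition comp (r : rel T) (a : T) : {set T} := [set z | connect r a z].

Definition is_aut e (f : T -> T) : Prop := bijective f /\
  (forall x y, e (f x) (f y) = e x y).

Definition mirror_block e (F : {set {set T}}) : Prop :=
  exists2 al : T -> T, is_aut e al &
    (forall u v, e u v -> [set u; v] \in F -> al u = v /\ al v = u) /\
    (* (ii) G - F has exactly two components G1 (of a), G2 (of b),
       and al maps G1 isomorphically onto G2 *)
    (let r := del_edges e F in
     exists a b,
       ~~ connect r a b /\
       (forall z, connect r a z || connect r b z) /\
       [set al z | z in comp r a] = comp r b /\
       (forall x y, x \in comp r a -> y \in comp r a ->
          r (al x) (al y) = r x y)).

Definition mirror_partition e (P : {set {set {set T}}}) : Prop :=
  partition P (edges e) /\ (forall F, F \in P -> mirror_block e F).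

Definition mirror_graph e : Prop := exists P, mirror_partition e P.

Definition harmonic_even e : Prop :=
  exists bar : T -> T,
    (forall v, dist e v (bar v) = diam e /\
               (forall w, dist e v w = diam e -> w = bar v)) /\
    (forall u v, e u v -> e (bar u) (bar v)).

End Graphs.

(* Main.v *)
Require Import Defs.
From mathcomp Require Import all_boot.
From mathcomp Require Import zify.
Set Implicit Arguments. Unset Strict Implicit. Unset Printing Implicit Defensive.

Lemma has_walkP (T : finType) (e : rel T) x y n :
  reflect (exists p : seq T, [/\ size p = n, path e x p & last x p = y])
          (has_walk e x y n).
Proof.
apply: (iffP existsP) => [[p /andP [Hp /eqP Hl]] | [p [Hs Hp Hl]]].
  by exists (val p); rewrite size_tuple.
exists (@Tuple n T p (introT eqP Hs)) => /=; by rewrite Hp Hl eqxx.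
Qed.

Lemma dist_min (T : finType) (e : rel T) x p :
  path e x p -> dist e x (last x p) <= size p.
Proof.
move=> Hp; rewrite /dist.
case: (ltnP (size p) #|T|) => H.
  rewrite leqNgt; apply/negP => Hlt.
  have Hw : has_walk e x (last x p) (size p) by apply/has_walkP; exists p.
  have := before_find 0 Hlt; rewrite nth_iota // add0n Hw.
  done.
apply: leq_trans H; by rewrite -{2}(size_iota 0 #|T|) find_size.
Qed.

Lemma dist_walk (T : finType) (e : rel T) x y : connect e x y ->
  exists p, [/\ size p = dist e x y, path e x p & last x p = y].
Proof.
move=> /connectP [p0 Hp0 ->].
case: (shortenP Hp0) => p Hp Hu _.
have Hs : size p < #|T|.
  have := max_card (mem (x :: p)); by rewrite (card_uniqP Hu) /=.
have Hh : has (has_walk e x (last x p)) (iota 0 #|T|).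
  apply/hasP; exists (size p); first by rewrite mem_iota.
  apply/has_walkP; by exists p.
have := nth_find 0 Hh; rewrite has_find size_iota in Hh.
rewrite nth_iota // add0n => /has_walkP [q [Hq1 Hq2 Hq3]].
by exists q.
Qed.

Fixpoint cnt (T : finType) (F : {set {set T}}) (x : T) (p : seq T) : nat :=
  if p is y :: p' then ([set x; y] \in F) + cnt F y p' else 0.

Lemma cnt_cat (T : finType) (F : {set {set T}}) x p q :
  cnt F x (p ++ q) = cnt F x p + cnt F (last x p) q.
Proof. by elim: p x => [|y p IH] x //=; rewrite IH addnA. Qed.

Lemma cnt_first (T : finType) (F : {set {set T}}) x p : 0 < cnt F x p ->
  exists q1 d q2, [/\ p = q1 ++ d :: q2, [set last x q1; d] \in F & cnt F x q1 = 0].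
Proof.
elim: p x => [|y p IH] x //=.
case Hxy: ([set x; y] \in F) => H.
  by exists [::], y, p.
rewrite add0n in H.
have [q1 [d [q2 [-> H1 H2]]]] := IH y H.
by exists (y :: q1), d, q2; rewrite /= Hxy H2.
Qed.

Lemma path_map_aut (T : finType) (e : rel T) (f : T -> T) x p :
  (forall a b, e (f a) (f b) = e a b) -> path e x p -> path e (f x) (map f p).
Proof. move=> Hf; elim: p x => [|y p IH] x //= /andP [H1 H2]; by rewrite Hf H1 IH. Qed.

Lemma block_data (T : finType) (e : rel T) F : symmetric e -> mirror_block e F ->
  exists al : T -> T, exists g : T -> T, exists sd : T -> bool,
   cancel al g /\ cancel g al /\ (forall a b, e (al a) (al b) = e a b) /\
   (forall u v, e u v -> [set u; v] \in F -> al u = v /\ al v = u) /\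
   (forall x y, connect (del_edges e F) x y = (sd x == sd y)) /\
   (forall z, sd (al z) = ~~ sd z) /\
   (forall a b, e a b -> (sd a != sd b) = ([set a; b] \in F)).
Proof.
move=> Hs [al [[g Hag Hga] Hal] [Hsw H]].
move: H => /= [a [b [Hab [Hcov [Him _]]]]].
set r := del_edges e F in Hab Hcov Him *.
have rs : symmetric r by move=> x y; rewrite /r /del_edges /= Hs setUC.
have cs : connect_sym r := sym_connect_sym rs.
pose sd z := connect r a z.
have Hcon : forall x y, connect r x y = (sd x == sd y).
  move=> x y; apply/idP/eqP => [Hxy|Exy].
    rewrite /sd; apply/idP/idP => H; first exact: connect_trans H Hxy.
    by apply: connect_trans H _; rewrite cs.
  move: Exy; rewrite /sd; case Ha: (connect r a x) => Ey.
    by apply: (@connect_trans _ _ a); rewrite // cs.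
  have Hbx : connect r b x by move: (Hcov x); rewrite Ha.
  have Hby : connect r b y by move: (Hcov y); rewrite -Ey.
  by apply: (@connect_trans _ _ b); rewrite // cs.
have Hsd : forall z, sd (al z) = ~~ sd z.
  move=> z; rewrite /sd; case Hz: (connect r a z) => /=.
    apply/negP => Haz.
    have : al z \in Defs.comp r b by rewrite -Him; apply: imset_f; rewrite inE.
    rewrite inE => Hbz; move/negP: Hab; apply.
    by apply: (@connect_trans _ _ (al z)); rewrite // cs.
  apply/negPn/negP => Haz.
  have : al z \in Defs.comp r b.
    by move: (Hcov (al z)); rewrite (negbTE Haz) /= => H; rewrite inE.
  rewrite -Him => /imsetP [z1 Hz1 E].
  move: (can_inj Hag E) => Ez; move: Hz1; by rewrite inE -Ez Hz.
exists al, g, sd; do 6 (split => //).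
move=> u v Huv; case HF: ([set u; v] \in F).
  have [E _] := Hsw u v Huv HF; by rewrite -E Hsd; case: (sd u).
apply/negbTE; rewrite negbK -Hcon; apply: connect1; by rewrite /r /del_edges /= Huv HF.
Qed.

Lemma edge_one (T : finType) (e : rel T) P x y :
  partition P (edges e) -> e x y ->
  \sum_(F in P) ([set x; y] \in F : nat) = 1.
Proof.
case/and3P => /eqP Hcov Htriv _ Hxy.
have : [set x; y] \in cover P.
  rewrite Hcov; apply/imset2P; exists x y => //; by rewrite inE.
case/bigcupP => F0 HF0 HE.
rewrite (bigD1 F0) //= HE big1 // => F /andP [HF HFF0].
apply/eqP; rewrite eqb0; apply/negP => HE'.
have := (trivIsetP Htriv) F0 F HF0 HF; rewrite eq_sym => /(_ HFF0) Hd.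
by rewrite (disjointFr Hd HE) in HE'.
Qed.

Lemma sum_cnt (T : finType) (e : rel T) P x p :
  partition P (edges e) -> path e x p ->
  size p = \sum_(F in P) cnt F x p.
Proof.
move=> HP; elim: p x => [|y p IH] x /=.
  by move=> _; rewrite big1.
move=> /andP [Hxy Hp].
rewrite big_split /= -IH // (edge_one HP Hxy) add1n //.
Qed.

Lemma parity (T : finType) (e : rel T) (F : {set {set T}}) (sd : T -> bool) x p :
  (forall a b, e a b -> (sd a != sd b) = ([set a; b] \in F)) ->
  path e x p -> sd (last x p) = sd x (+) odd (cnt F x p).
Proof.
move=> Hedge; elim: p x => [|y p IH] x /=; first by rewrite addbF.
move=> /andP [Hxy Hp]; rewrite IH // oddD oddb -(Hedge _ _ Hxy).
by case: (sd x); case: (sd y); case: (odd _).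
Qed.

Lemma shorten_walk (T : finType) (e : rel T) F x p :
  symmetric e -> mirror_block e F -> path e x p -> 1 < cnt F x p ->
  exists p', [/\ path e x p', last x p' = last x p & (size p').+2 = size p].
Proof.
move=> Hs Hm Hp Hc.
have [al [g [sd [Hag [Hga [Hal [Hsw _]]]]]]] := block_data Hs Hm.
have [q1 [d [q2 [Ep H1 H0]]]] := cnt_first (ltnW Hc).
rewrite Ep cnt_cat H0 add0n /= H1 add1n ltnS in Hc.
have [r1 [f [r2 [Eq H2 _]]]] := cnt_first Hc.
move: Hp; rewrite Ep Eq cat_path /= => /andP [Hq1 /andP [Hcd Hrest]].
move: Hrest; rewrite cat_path /= => /andP [Hr1 /andP [Hff Hr2]].
have [Hacd Hadc] := Hsw _ _ Hcd H1.
have [Haf _] := Hsw _ _ Hff H2.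
exists (q1 ++ map al r1 ++ r2); split.
- rewrite cat_path Hq1 /= cat_path.
  have := path_map_aut Hal Hr1; rewrite Hadc => -> /=.
  by rewrite -Hadc last_map Haf.
- by rewrite !last_cat /= -Hadc last_map Haf last_cat.
- by rewrite !size_cat /= size_map size_cat /=; lia.
Qed.

Definition sep (T : finType) (e : rel T) (F : {set {set T}}) x y :=
  ~~ connect (del_edges e F) x y.

Lemma distK (T : finType) (e : rel T) P x y :
  simple_connected_graph e -> mirror_partition e P ->
  dist e x y = \sum_(F in P) sep e F x y.
Proof.
move=> [Hs [Hirr Hc]] [Hpart Hm].
have [p [Hsz Hp Hl]] := dist_walk (Hc x y).
rewrite -Hsz (sum_cnt Hpart Hp); apply: eq_bigr => F HF.
have [al [g [sd [_ [_ [_ [_ [Hcon [_ Hedge]]]]]]]]] := block_data Hs (Hm F HF).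
have Hle : cnt F x p <= 1.
  rewrite leqNgt; apply/negP => H.
  have [p' [Hp' Hl' Hs']] := shorten_walk Hs (Hm F HF) Hp H.
  have := dist_min Hp'; rewrite Hl' Hl -Hsz -Hs'; lia.
have Hpar := parity Hedge Hp; rewrite Hl in Hpar.
rewrite /sep Hcon Hpar.
case: (cnt F x p) Hle => [|[|n]] //= _; by case: (sd x).
Qed.

Lemma sep_data (T : finType) (e : rel T) F : symmetric e -> mirror_block e F ->
  exists sd : T -> bool, forall x y, sep e F x y = (sd x != sd y).
Proof.
move=> Hs Hm.
have [al [g [sd [_ [_ [_ [_ [Hcon _]]]]]]]] := block_data Hs Hm.
by exists sd => x y; rewrite /sep Hcon.
Qed.

Lemma sep_xor (T : finType) (e : rel T) F x y z : symmetric e -> mirror_block e F ->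
  sep e F x z = sep e F x y (+) sep e F y z.
Proof.
move=> Hs Hm; have [sd Hsd] := sep_data Hs Hm.
by rewrite !Hsd; case: (sd x); case: (sd y); case: (sd z).
Qed.

Lemma sep_sym (T : finType) (e : rel T) F x y : symmetric e -> mirror_block e F ->
  sep e F x y = sep e F y x.
Proof.
move=> Hs Hm; have [sd Hsd] := sep_data Hs Hm.
by rewrite !Hsd; case: (sd x); case: (sd y).
Qed.

Lemma max_sep (T : finType) (e : rel T) P v w F :
  simple_connected_graph e -> mirror_partition e P -> F \in P ->
  (forall w', dist e v w' <= dist e v w) -> sep e F v w.
Proof.
move=> [Hs [Hirr Hc]] [Hpart Hm] HF Hmax.
have [al [g [sd [Hag [Hga [Hal [Hsw [Hcon [Hsd Hedge]]]]]]]]] := block_data Hs (Hm F HF).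
rewrite /sep Hcon; apply/negP => /eqP Evw.
have [p [Hsz Hp Hl]] := dist_walk (Hc v (al w)).
have Hpar := parity Hedge Hp; rewrite Hl Hsd -Evw in Hpar.
have Hodd : odd (cnt F v p) by move: Hpar; case: (sd v); case: (odd _).
have [q1 [d [q2 [Ep H1 _]]]] := cnt_first (odd_gt0 Hodd).
move: Hp; rewrite Ep cat_path /= => /andP [Hq1 /andP [Hcd Hq2]].
have [Hacd _] := Hsw _ _ Hcd H1.
have Hg : forall a b, e (g a) (g b) = e a b by move=> a b; rewrite -Hal !Hga.
have Ec : last v q1 = g d by rewrite -Hacd Hag.
have Hpath : path e v (q1 ++ map g q2).
  rewrite cat_path Hq1 /= Ec; exact: path_map_aut Hg Hq2.
have Hlast : last v (q1 ++ map g q2) = w.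
  move: Hl; rewrite Ep last_cat /= => Hl.
  by rewrite last_cat Ec last_map Hl Hag.
have := dist_min Hpath; rewrite Hlast size_cat size_map => Hd.
have := Hmax (al w); rewrite -Hsz Ep size_cat /=; lia.
Qed.

Lemma sum_bool_all (I : finType) (A : {set I}) (b : I -> bool) :
  \sum_(i in A) (b i : nat) = #|A| -> forall i, i \in A -> b i.
Proof.
move=> H i Hi; apply/negPn/negP => Hb.
have : \sum_(j in A) (b j : nat) < \sum_(j in A) 1.
  rewrite (bigD1 i) //= [X in _ < X](bigD1 i) //= (negbTE Hb) add0n add1n ltnS.
  apply: leq_sum => j _; exact: leq_b1.
by rewrite sum1_card H ltnn.
Qed.

Lemma dist0 (T : finType) (e : rel T) x y : connect e x y -> dist e x y = 0 -> x = y.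
Proof.
move=> Hc H0; have [p [Hsz _ Hl]] := dist_walk Hc.
by case: p Hsz Hl => [|z p] //=; rewrite H0.
Qed.

Theorem lemma1 (T : finType) (e : rel T) :
  simple_connected_graph e -> mirror_graph e -> harmonic_even e.
Proof.
move=> G [P HP].
have [Hs [Hirr Hc]] := G; have [Hpart Hm] := HP.
pose bar v := [arg max_(w > v) dist e v w].
have Hbar : forall v F, F \in P -> sep e F v (bar v).
  move=> v F HF; apply: (max_sep G HP HF).
  rewrite /bar; case: arg_maxnP => // w _ Hw w'; exact: Hw.
have Hdbar : forall v, dist e v (bar v) = #|P|.
  move=> v; rewrite (distK _ _ G HP) -sum1_card; apply: eq_bigr => F HF.
  by rewrite Hbar.
have Hbound : forall x y, dist e x y <= #|P|.
  move=> x y; rewrite (distK _ _ G HP) -sum1_card.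
  apply: leq_sum => F _; exact: leq_b1.
have Hdiam : forall v : T, diam e = #|P|.
  move=> v; apply/eqP; rewrite eqn_leq; apply/andP; split.
    apply/bigmax_leqP => x _; apply/bigmax_leqP => y _; exact: Hbound.
  rewrite -(Hdbar v) /diam.
  apply: (@leq_trans (\max_y dist e v y)).
      exact: (@leq_bigmax T (fun y => dist e v y) (bar v)).
  exact: (@leq_bigmax T (fun x => \max_(y : T) dist e x y) v).
exists bar; split.
  move=> v; split; first by rewrite (Hdiam v) Hdbar.
  move=> w Hw; rewrite (Hdiam v) (distK _ _ G HP) in Hw.
  have Hall := sum_bool_all Hw.
  apply/esym/dist0; first exact: Hc.
  rewrite (distK _ _ G HP) big1 // => F HF.
  rewrite (sep_xor (bar v) v w Hs (Hm F HF)) (sep_sym (bar v) v Hs (Hm F HF)).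
  by rewrite Hbar // Hall.
move=> u v Huv.
have H1 : dist e u v = 1.
  have := dist_min (p := [:: v]) (x := u) (e := e); rewrite /= Huv => /(_ isT).
  case Hd: (dist e u v) => [|[|n]] // _.
  have Euv := dist0 (Hc u v) Hd; by rewrite Euv (Hirr v) in Huv.
have : dist e (bar u) (bar v) = 1.
  rewrite (distK _ _ G HP) -H1 (distK _ _ G HP); apply: eq_bigr => F HF.
  rewrite (sep_xor (bar u) u (bar v) Hs (Hm F HF)) (sep_sym (bar u) u Hs (Hm F HF)) Hbar //.
  by rewrite (sep_xor u v (bar v) Hs (Hm F HF)) Hbar // addbT addTb negbK.
move=> Hd1; have [p [Hsz Hp Hl]] := dist_walk (Hc (bar u) (bar v)).
rewrite Hd1 in Hsz.
case: p Hsz Hp Hl => [|z [|z' p]] //= _ /andP [H _] <-; exact: H.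
Qed.
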